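(* Let $0<q<1$, $s\ge1$, $\alpha\in\mathbb{R}\setminus\mathbb{Z}_-$. For $j=1,\dots,s-1$ let $a_j>0$, $c_j>0$ be real and $b_j,d_j\in\mathbb{C}$ with $a_jn+\mathrm{Re}(b_j)\notin\mathbb{Z}_-$ and $c_jn+\mathrm{Re}(d_j)\notin\mathbb{Z}_-$ for all positive integers $n$ (for $s=1$ there are no such parameters). Then, uniformly on compact subsets of $\mathbb{C}$, $$\lim_{n\to+\infty}{}_s\phi_s\!\left(\begin{array}{c}q^{-n},q^{a_1n+b_1},\dots,q^{a_{s-1}n+b_{s-1}}\\ q^{\alpha},q^{c_1n+d_1},\dots,q^{c_{s-1}n+d_{s-1}}\end{array};q,q^nz\right)={}_0\phi_1\!\left(\begin{array}{c}-\\ q^{\alpha}\end{array};q,z\right)=\left(\frac{-z}{(q-1)^2q^{\alpha}}\right)^{\frac{1-\alpha}{2}}\Gamma_q(\alpha)\,J^{(2)}_{\alpha-1}\!\left(2\sqrt{\frac{-z}{q^{\alpha}}};q\right),$$ where in the last expression powers and square roots are taken with principal branches and the expression is understood as the entire function given by the ${}_0\phi_1$.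
   Context: $\mathbb{Z}_-=\{0,-1,-2,\dots\}$. For $w\in\mathbb{C}$, $q^{w}:=e^{w\ln q}$. For $a\in\mathbb{C}$: $(a;q)_0=1$, $(a;q)_k=\prod_{j=0}^{k-1}(1-aq^{j})$, $(a;q)_\infty=\prod_{j\ge0}(1-aq^{j})$, and $(a_1,\dots,a_r;q)_k=\prod_{i=1}^r(a_i;q)_k$. The basic hypergeometric series is $${}_r\phi_s\!\left(\begin{array}{c}a_1,\dots,a_r\\ b_1,\dots,b_s\end{array};q,z\right)=\sum_{k=0}^{\infty}\frac{(a_1,\dots,a_r;q)_k}{(b_1,\dots,b_s;q)_k}(-1)^{(1+s-r)k}q^{(1+s-r)\binom{k}{2}}\frac{z^k}{(q;q)_k};$$ ''$-$'' denotes an empty parameter list. The $q$-Gamma function is $\Gamma_q(z)=\dfrac{(q;q)_\infty}{(q^{z};q)_\infty}(1-q)^{1-z}$. The $q$-Bessel function is $J^{(2)}_{\nu}(x;q)=\dfrac{(q^{\nu+1};q)_\infty}{(q;q)_\infty}\left(\dfrac{x}{2}\right)^{\nu}{}_0\phi_1\!\left(\begin{array}{c}-\\ q^{\nu+1}\end{array};q,-\dfrac{q^{\nu+1}x^2}{4}\right)$. *)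

(* Defs.v *)
From Stdlib Require Import Reals List.
From Coquelicot Require Import Coquelicot.
Open Scope R_scope.

Definition Cexp (w : C) : C := (exp (fst w) * cos (snd w), exp (fst w) * sin (snd w)).

Definition qpow (q : R) (w : C) : C := Cexp (Cmult (RtoC (ln q)) w).

(** Principal argument in (-pi, pi]. *)
Definition Carg (w : C) : R :=
  let x := fst w in let y := snd w in
  if Rlt_dec 0 x then atan (y / x)
  else if Rlt_dec x 0 then
    (if Rle_dec 0 y then atan (y / x) + PI else atan (y / x) - PI)
  else (if Rlt_dec 0 y then PI / 2 else if Rlt_dec y 0 then - (PI / 2) else 0).

Definition Clog (w : C) : C := (ln (Cmod w), Carg w).
Definition cpow (w c : C) : C := Cexp (Cmult c (Clog w)).
Definition csqrt (w : C) : C := cpow w (RtoC (1 / 2)).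

Fixpoint qpoch (a : C) (q : R) (k : nat) : C :=
  match k with
  | O => RtoC 1
  | S k' => Cmult (qpoch a q k') (Cminus (RtoC 1) (Cmult a (RtoC (q ^ k'))))
  end.

Definition qpoch_list (l : list C) (q : R) (k : nat) : C :=
  fold_right (fun a acc => Cmult (qpoch a q k) acc) (RtoC 1) l.

Definition Clim (u : nat -> C) : C := @lim C_CompleteNormedModule (filtermap u eventually).

Definition qpoch_inf (a : C) (q : R) : C := Clim (qpoch a q).

Fixpoint Cpsum (u : nat -> C) (N : nat) : C :=
  match N with
  | O => u O
  | S N' => Cplus (Cpsum u N') (u N)
  end.
Definition Cseries (u : nat -> C) : C := Clim (Cpsum u).

Definition phi_term (al bl : list C) (q : R) (z : C) (k : nat) : C :=
  let r := length al in let s := length bl in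
  Cmult (Cdiv (qpoch_list al q k) (qpoch_list bl q k))
    (Cmult (RtoC (powerRZ ((-1) ^ k * q ^ (Nat.div (k * (k - 1)) 2))
                         (1 + Z.of_nat s - Z.of_nat r)%Z))
       (Cdiv (Cpow z k) (qpoch (RtoC q) q k))).

Definition phi (al bl : list C) (q : R) (z : C) : C :=
  Cseries (phi_term al bl q z).

Definition qGamma (q : R) (w : C) : C :=
  Cmult (Cdiv (qpoch_inf (RtoC q) q) (qpoch_inf (qpow q w) q))
        (qpow (1 - q) (Cminus (RtoC 1) w)).

Definition J2 (nu x : C) (q : R) : C :=
  let qn1 := qpow q (Cplus nu (RtoC 1)) in
  Cmult (Cdiv (qpoch_inf qn1 q) (qpoch_inf (RtoC q) q))
   (Cmult (cpow (Cdiv x (RtoC 2)) nu)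
     (phi nil (qn1 :: nil) q
        (Cdiv (Copp (Cmult qn1 (Cmult x x))) (RtoC 4)))).

Definition compactC (K : C -> Prop) : Prop :=
  forall (I : Type) (U : I -> C -> Prop),
    (forall i, @open C_UniformSpace (U i)) ->
    (forall z, K z -> exists i, U i z) ->
    exists l : list I, forall z, K z -> exists i, In i l /\ U i z.

Definition cvg_unif_compact (f : nat -> C -> C) (g : C -> C) : Prop :=
  forall K, compactC K ->
    forall eps : R, 0 < eps ->
      exists N : nat, forall n : nat, (N <= n)%nat ->
        forall z, K z -> Cmod (Cminus (f n z) (g z)) < eps.

(* Main.v *)
Require Import Defs.
From Stdlib Require Import Reals List Lra Lia ZArith.
From Coquelicot Require Import Coquelicot.
Open Scope R_scope.

Lemma Cexp_RtoC r : Cexp (RtoC r) = RtoC (exp r).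
Proof. unfold Cexp, RtoC; simpl. rewrite cos_0, sin_0. f_equal; ring. Qed.

Lemma Cmod_Cexp w : Cmod (Cexp w) = exp (fst w).
Proof.
  unfold Cmod, Cexp; cbn [fst snd].
  replace ((exp (fst w) * cos (snd w)) ^ 2 + (exp (fst w) * sin (snd w)) ^ 2)
    with (exp (fst w) ^ 2) .
  - apply sqrt_pow2. left; apply exp_pos.
  - pose proof (sin2_cos2 (snd w)) as H. unfold Rsqr in H. replace (exp (fst w) ^ 2) with (exp (fst w) ^ 2 * (sin (snd w) * sin (snd w) + cos (snd w) * cos (snd w))) by (rewrite H; ring). ring.
Qed.

Lemma Cexp_plus u v : Cexp (Cplus u v) = Cmult (Cexp u) (Cexp v).
Proof.
  destruct u as [a b]; destruct v as [c d]; unfold Cexp, Cmult, Cplus; simpl.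
  rewrite exp_plus, cos_plus, sin_plus. f_equal; ring.
Qed.

Lemma Cexp_0 : Cexp (RtoC 0) = RtoC 1.
Proof. rewrite Cexp_RtoC, exp_0. reflexivity. Qed.

Lemma qpow_RtoC q r : qpow q (RtoC r) = RtoC (exp (ln q * r)).
Proof.
  unfold qpow. replace (Cmult (RtoC (ln q)) (RtoC r)) with (RtoC (ln q * r)).
  apply Cexp_RtoC. unfold RtoC, Cmult; simpl; f_equal; ring.
Qed.

Lemma Cmod_qpow q w : Cmod (qpow q w) = exp (ln q * fst w).
Proof. unfold qpow. rewrite Cmod_Cexp. simpl. f_equal. ring. Qed.

Lemma RtoC_inj_eq a b : a = b -> RtoC a = RtoC b.
Proof. intros ->; reflexivity. Qed.

Definition CL (u : nat -> C) (L : C) : Prop :=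
  forall eps, 0 < eps -> exists N, forall n, (N <= n)%nat -> Cmod (Cminus (u n) L) < eps.

Lemma CL_ext u v L : (forall n, u n = v n) -> CL u L -> CL v L.
Proof. intros E H eps He. destruct (H eps He) as [N HN]. exists N. intros n Hn. rewrite <- E. auto. Qed.

Lemma CL_const c : CL (fun _ => c) c.
Proof. intros eps He. exists O. intros n _. replace (Cminus c c) with (RtoC 0) by ring.
  rewrite Cmod_0. auto. Qed.

Lemma Cmod_minus_sym a b : Cmod (Cminus a b) = Cmod (Cminus b a).
Proof. replace (Cminus a b) with (Copp (Cminus b a)) by ring. apply Cmod_opp. Qed.

Lemma Cmod_rev_tri a b : Cmod a - Cmod (Cminus a b) <= Cmod b.
Proof. pose proof (Cmod_triangle (Cminus a b) b). replace (Cplus (Cminus a b) b) with a in H by ring. lra. Qed.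

Lemma CL_mult u v a b : CL u a -> CL v b -> CL (fun n => Cmult (u n) (v n)) (Cmult a b).
Proof.
  intros Hu Hv eps He.
  set (K := 1 + Cmod a + Cmod b).
  assert (HK : 1 <= K) by (unfold K; pose proof (Cmod_ge_0 a); pose proof (Cmod_ge_0 b); lra).
  set (d := eps / (K + eps)).
  assert (Hd0 : 0 < d) by (unfold d; apply Rdiv_lt_0_compat; lra).
  assert (Hdd : d * (K + eps) = eps) by (unfold d; field; lra).
  assert (Hd1 : d <= 1) by nra.
  assert (Hd2 : d * K < eps) by nra.
  destruct (Hu d Hd0) as [N1 H1]. destruct (Hv d Hd0) as [N2 H2].
  exists (max N1 N2). intros n Hn.
  specialize (H1 n ltac:(lia)). specialize (H2 n ltac:(lia)).
  replace (Cminus (Cmult (u n) (v n)) (Cmult a b)) with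
    (Cplus (Cplus (Cmult (Cminus (u n) a) (Cminus (v n) b)) (Cmult a (Cminus (v n) b)))
       (Cmult b (Cminus (u n) a))) by ring.
  eapply Rle_lt_trans. apply Cmod_triangle.
  eapply Rle_lt_trans. apply Rplus_le_compat_r. apply Cmod_triangle.
  rewrite !Cmod_mult.
  pose proof (Cmod_ge_0 a); pose proof (Cmod_ge_0 b);
  pose proof (Cmod_ge_0 (Cminus (u n) a)); pose proof (Cmod_ge_0 (Cminus (v n) b)).
  unfold K in Hd2. nra.
Qed.

Lemma CL_inv u a : a <> RtoC 0 -> CL u a -> CL (fun n => Cinv (u n)) (Cinv a).
Proof.
  intros Ha Hu eps He.
  assert (Hma : 0 < Cmod a) by (apply Cmod_gt_0; auto).
  set (d := Rmin (Cmod a / 2) (eps * Cmod a * Cmod a / 2)).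
  assert (Hd0 : 0 < d) by (unfold d; apply Rmin_pos; [lra|];
    apply Rdiv_lt_0_compat; [|lra]; apply Rmult_lt_0_compat; [apply Rmult_lt_0_compat|]; lra).
  destruct (Hu d Hd0) as [N HN]. exists N. intros n Hn. specialize (HN n Hn).
  assert (Hd1 : d <= Cmod a / 2) by apply Rmin_l.
  assert (Hd2 : d <= eps * Cmod a * Cmod a / 2) by apply Rmin_r.
  pose proof (Cmod_rev_tri a (u n)). rewrite Cmod_minus_sym in H.
  assert (Hun : 0 < Cmod (u n)) by lra.
  assert (Hun' : u n <> RtoC 0) by (apply Cmod_gt_0; auto).
  replace (Cminus (Cinv (u n)) (Cinv a)) with (Cmult (Cminus a (u n)) (Cinv (Cmult (u n) a)))
    by (field; auto).
  rewrite Cmod_mult, Cmod_inv, Cmod_mult by (apply Cmult_neq_0; auto).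
  rewrite Cmod_minus_sym.
  apply Rmult_lt_reg_r with (Cmod (u n) * Cmod a). nra.
  rewrite Rmult_assoc, Rinv_l by nra. 
  assert (Cmod a / 2 <= Cmod (u n)) by lra.
  nra.
Qed.

Lemma CL_RtoC (u : nat -> R) l :
  (forall eps, 0 < eps -> exists N, forall n, (N <= n)%nat -> Rabs (u n - l) < eps) ->
  CL (fun n => RtoC (u n)) (RtoC l).
Proof.
  intros H eps He. destruct (H eps He) as [N HN]. exists N. intros n Hn.
  replace (Cminus (RtoC (u n)) (RtoC l)) with (RtoC (u n - l)).
  rewrite Cmod_R. auto. unfold Cminus, Cplus, Copp, RtoC; simpl; f_equal; ring.
Qed.

Lemma CL_pow_lt1 r : 0 <= r < 1 -> CL (fun n => RtoC (r ^ n)) (RtoC 0).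
Proof.
  intros Hr. apply CL_RtoC. intros eps He.
  destruct (pow_lt_1_zero r ltac:(rewrite Rabs_pos_eq; lra) eps He) as [N HN].
  exists N. intros n Hn. rewrite Rminus_0_r. apply HN. lia.
Qed.

Lemma CL_eq u L L' : L = L' -> CL u L -> CL u L'.
Proof. intros ->; auto. Qed.

Lemma CL_mult' u v w a b c : CL u a -> CL v b -> c = Cmult a b -> (forall n, w n = Cmult (u n) (v n)) -> CL w c.
Proof. intros Hu Hv -> E. apply CL_ext with (fun n => Cmult (u n) (v n)). auto. apply CL_mult; auto. Qed.

Lemma pow_le1 q j : 0 <= q <= 1 -> q ^ j <= 1.
Proof. intros H. rewrite <- (pow1 j). apply pow_incr. lra. Qed.

Lemma pow_decr q m n : 0 <= q <= 1 -> (m <= n)%nat -> q ^ n <= q ^ m.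
Proof. intros H Hmn. replace n with (m + (n - m))%nat by lia. rewrite pow_add.
  pose proof (pow_le1 q (n - m) H). pose proof (pow_le q m ltac:(lra)). nra. Qed.

Lemma qpoch_S a q k : qpoch a q (S k) = Cmult (qpoch a q k) (Cminus (RtoC 1) (Cmult a (RtoC (q ^ k)))).
Proof. reflexivity. Qed.

Lemma CL_qpoch (g : nat -> C) q k : CL g (RtoC 0) -> CL (fun n => qpoch (g n) q k) (RtoC 1).
Proof.
  intros Hg. induction k.
  - apply CL_ext with (fun _ => RtoC 1); [reflexivity|apply CL_const].
  - apply (CL_mult' (fun n => qpoch (g n) q k) (fun n => Cminus (RtoC 1) (Cmult (g n) (RtoC (q ^ k)))) _ (RtoC 1) (RtoC 1)).
    exact IHk. 2: ring. 2: intros; reflexivity.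
    intros eps He. destruct (CL_mult _ _ _ _ Hg (CL_const (RtoC (q ^ k))) eps He) as [N HN].
    exists N; intros n Hn. specialize (HN n Hn).
    replace (Cminus (Cminus (RtoC 1) (Cmult (g n) (RtoC (q ^ k)))) (RtoC 1))
      with (Copp (Cminus (Cmult (g n) (RtoC (q ^ k))) (Cmult (RtoC 0) (RtoC (q ^ k))))) by ring.
    rewrite Cmod_opp. exact HN.
Qed.

Lemma Cmod_factor_le x q j : 0 <= q <= 1 -> Cmod (Cminus (RtoC 1) (Cmult x (RtoC (q ^ j)))) <= 1 + Cmod x.
Proof.
  intros Hq. unfold Cminus. eapply Rle_trans. apply Cmod_triangle.
  rewrite Cmod_1, Cmod_opp, Cmod_mult, Cmod_R, Rabs_pos_eq by (apply pow_le; lra).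
  pose proof (Cmod_ge_0 x). assert (q ^ j <= 1) by (apply pow_le1; lra). nra.
Qed.

Lemma Cmod_qpoch_le x q k : 0 <= q <= 1 -> Cmod (qpoch x q k) <= (1 + Cmod x) ^ k.
Proof.
  intros Hq. induction k.
  - simpl. rewrite Cmod_1. lra.
  - rewrite qpoch_S, Cmod_mult. simpl pow. rewrite Rmult_comm.
    apply Rmult_le_compat; try apply Cmod_ge_0; auto. apply Cmod_factor_le; auto.
Qed.

Lemma Cmod_qpoch_ge x q k d : 0 <= d ->
  (forall j, d <= Cmod (Cminus (RtoC 1) (Cmult x (RtoC (q ^ j))))) -> d ^ k <= Cmod (qpoch x q k).
Proof.
  intros Hd H. induction k.
  - simpl. rewrite Cmod_1. lra.
  - rewrite qpoch_S, Cmod_mult. simpl pow. rewrite Rmult_comm.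
    apply Rmult_le_compat; auto. apply pow_le; auto.
Qed.

Lemma qpoch_list_cons x l q k : qpoch_list (x :: l) q k = Cmult (qpoch x q k) (qpoch_list l q k).
Proof. reflexivity. Qed.

Lemma qpoch_list_le l q k P : (forall x, In x l -> Cmod (qpoch x q k) <= P) ->
  Cmod (qpoch_list l q k) <= P ^ length l.
Proof.
  induction l as [|x l IH]; intros H.
  - simpl. rewrite Cmod_1. lra.
  - rewrite qpoch_list_cons, Cmod_mult. simpl length. simpl pow.
    apply Rmult_le_compat; try apply Cmod_ge_0; auto. apply H; simpl; auto.
    apply IH. intros y Hy; apply H; simpl; auto.
Qed.

Lemma qpoch_list_ge l q k P : 0 <= P -> (forall x, In x l -> P <= Cmod (qpoch x q k)) ->
  P ^ length l <= Cmod (qpoch_list l q k).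
Proof.
  induction l as [|x l IH]; intros HP H.
  - simpl. rewrite Cmod_1. lra.
  - rewrite qpoch_list_cons, Cmod_mult. simpl length. simpl pow.
    apply Rmult_le_compat; auto. apply pow_le; auto. apply H; simpl; auto.
    apply IH; auto. intros y Hy; apply H; simpl; auto.
Qed.

Lemma CL_qpoch_list (f : nat -> nat -> C) (l : list nat) q k :
  (forall j, In j l -> CL (fun n => qpoch (f n j) q k) (RtoC 1)) ->
  CL (fun n => qpoch_list (map (f n) l) q k) (RtoC 1).
Proof.
  induction l as [|j l IH]; intros H.
  - apply CL_ext with (fun _ => RtoC 1); [reflexivity|apply CL_const].
  - apply (CL_mult' (fun n => qpoch (f n j) q k) (fun n => qpoch_list (map (f n) l) q k) _ (RtoC 1) (RtoC 1)).
    apply H; simpl; auto. apply IH. intros; apply H; simpl; auto. ring. intros; reflexivity.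
Qed.

Lemma Clim_CL u L : CL u L -> Clim u = L.
Proof.
  intros H. unfold Clim.
  assert (HF : ProperFilter (filtermap u eventually)).
  { apply filtermap_proper_filter. apply eventually_filter. }
  assert (Hl : filterlim u eventually (locally L)).
  { intros P [eps He].
    destruct (H eps (cond_pos eps)) as [N HN].
    exists N. intros n Hn. apply He.
    specialize (HN n Hn).
    split; simpl.
    - eapply Rle_lt_trans; [|exact HN].
      eapply Rle_trans; [|apply Rmax_Cmod]. apply Rmax_l.
    - eapply Rle_lt_trans; [|exact HN].
      eapply Rle_trans; [|apply Rmax_Cmod]. apply Rmax_r. }
  symmetry.
  apply (@is_filter_lim_unique _ C_NormedModule (filtermap u eventually)).
  - apply Proper_StrongProper. exact HF.
  - exact Hl.
  - intros P [eps He].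
    assert (Hc : cauchy (filtermap u eventually)).
    { intros e. exists L. apply Hl. exists e. auto. }
    generalize (@complete_cauchy C_CompleteNormedModule (filtermap u eventually) HF Hc eps).
    apply filter_imp. exact He.
Qed.

Fixpoint rp (x q : R) (k : nat) : R :=
  match k with O => 1 | S k' => rp x q k' * (1 - x * q ^ k') end.

Lemma qpoch_RtoC x q k : qpoch (RtoC x) q k = RtoC (rp x q k).
Proof.
  induction k. reflexivity.
  rewrite qpoch_S, IHk. simpl rp. unfold RtoC, Cmult, Cminus, Cplus, Copp; simpl; f_equal; ring.
Qed.

Lemma rp_add x q J k : rp x q (J + k) = rp x q J * rp (x * q ^ J) q k.
Proof.
  induction k. simpl. rewrite Nat.add_0_r; ring.
  rewrite Nat.add_succ_r. simpl rp. rewrite IHk, pow_add. ring.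
Qed.

Lemma rp_nonzero x q J : (forall j, x * q ^ j <> 1) -> rp x q J <> 0.
Proof.
  intros H. induction J. simpl; lra. simpl. apply Rmult_integral_contrapositive_currified; auto.
  specialize (H J). lra.
Qed.

Lemma rp_bounds y q k : 0 < q < 1 -> 0 <= y <= (1 - q) / 2 ->
  0 <= rp y q k <= 1 /\ 1 - y * (1 - q ^ k) / (1 - q) <= rp y q k.
Proof.
  intros Hq Hy. induction k.
  - simpl. split. lra. unfold Rdiv. rewrite Rminus_diag, Rmult_0_r, Rmult_0_l. lra.
  - destruct IHk as [[H0 H1] H2]. simpl rp.
    assert (Hqk : 0 < q ^ k <= 1) by (split; [apply pow_lt; lra| apply pow_le1; lra]).
    assert (Hf : 0 <= 1 - y * q ^ k <= 1) by nra.
    split. split; nra.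
    assert (E : 1 - y * (1 - q ^ S k) / (1 - q) = 1 - y * (1 - q ^ k) / (1 - q) - y * q ^ k)
      by (simpl; field; lra).
    rewrite E. nra.
Qed.

Lemma rp_decr y q k : 0 < q < 1 -> 0 <= y <= (1 - q) / 2 -> rp y q (S k) <= rp y q k.
Proof.
  intros Hq Hy. destruct (rp_bounds y q k Hq Hy) as [[H0 H1] _]. simpl rp.
  assert (Hqk : 0 < q ^ k <= 1) by (split; [apply pow_lt; lra| apply pow_le1; lra]).
  assert (0 <= y * q ^ k) by nra. nra.
Qed.

Lemma rp_lim y q : 0 < q < 1 -> 0 <= y <= (1 - q) / 2 ->
  exists l, 1/2 <= l /\ forall eps, 0 < eps -> exists N, forall n, (N <= n)%nat -> Rabs (rp y q n - l) < eps.
Proof.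
  intros Hq Hy.
  assert (Hlb : forall n, 1/2 <= rp y q n).
  { intros n. destruct (rp_bounds y q n Hq Hy) as [_ H].
    assert (0 < q ^ n) by (apply pow_lt; lra).
    assert (y * (1 - q ^ n) / (1 - q) <= 1/2).
    { apply Rmult_le_reg_r with (1 - q). lra. unfold Rdiv. rewrite Rmult_assoc, Rinv_l by lra. nra. }
    lra. }
  destruct (ex_finite_lim_seq_decr (rp y q) (1/2) (fun n => rp_decr y q n Hq Hy) Hlb) as [l Hl].
  apply is_lim_seq_spec in Hl. simpl in Hl.
  assert (Hconv : forall eps, 0 < eps -> exists N, forall n, (N <= n)%nat -> Rabs (rp y q n - l) < eps).
  { intros eps He. destruct (Hl (mkposreal eps He)) as [N HN]. exists N. intros n Hn. apply HN. lia. }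
  exists l. split; auto.
  destruct (Rle_lt_dec (1/2) l) as [Hle|Hlt]; auto.
  destruct (Hconv (1/2 - l) ltac:(lra)) as [N HN]. specialize (HN N (le_n N)).
  specialize (Hlb N). apply Rabs_def2 in HN. lra.
Qed.

Lemma exists_small_pow q c : 0 < q < 1 -> 0 < c -> exists J, q ^ J <= c.
Proof.
  intros Hq Hc. destruct (pow_lt_1_zero q ltac:(rewrite Rabs_pos_eq; lra) c Hc) as [N HN].
  exists N. specialize (HN N (le_n N)). rewrite Rabs_pos_eq in HN. lra. apply pow_le; lra.
Qed.

Lemma qpoch_inf_RtoC x q : 0 < q < 1 -> 0 < x -> (forall j, x * q ^ j <> 1) ->
  exists L, L <> 0 /\ qpoch_inf (RtoC x) q = RtoC L.
Proof.
  intros Hq Hx Hne.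
  destruct (exists_small_pow q ((1 - q) / 2 / x) Hq) as [J HJ].
  { apply Rdiv_lt_0_compat; lra. }
  assert (Hy : 0 <= x * q ^ J <= (1 - q) / 2).
  { split. apply Rmult_le_pos. lra. apply pow_le; lra.
    apply Rmult_le_reg_l with (/ x). apply Rinv_0_lt_compat; lra.
    rewrite <- Rmult_assoc, Rinv_l, Rmult_1_l by lra. unfold Rdiv in HJ. lra. }
  destruct (rp_lim (x * q ^ J) q Hq Hy) as [l [Hl Hconv]].
  pose proof (rp_nonzero x q J Hne) as HJ0.
  exists (rp x q J * l). split. apply Rmult_integral_contrapositive_currified; lra.
  apply Clim_CL. apply CL_ext with (fun n => RtoC (rp x q n)). intros; symmetry; apply qpoch_RtoC.
  apply CL_RtoC. intros eps He.
  assert (Ha : 0 < Rabs (rp x q J)) by (apply Rabs_pos_lt; auto).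
  destruct (Hconv (eps / Rabs (rp x q J)) ltac:(apply Rdiv_lt_0_compat; lra)) as [N HN].
  exists (J + N)%nat. intros n Hn.
  replace n with (J + (n - J))%nat by lia. rewrite rp_add.
  rewrite <- Rmult_minus_distr_l, Rabs_mult.
  specialize (HN (n - J)%nat ltac:(lia)).
  apply Rmult_lt_reg_l with (/ Rabs (rp x q J)). apply Rinv_0_lt_compat; auto.
  rewrite <- Rmult_assoc, Rinv_l, Rmult_1_l by lra. unfold Rdiv in HN. lra.
Qed.

Lemma atan_nonpos t : t <= 0 -> atan t <= 0.
Proof. intros H. destruct (Req_dec t 0) as [->|Hn]. rewrite atan_0; lra.
  rewrite <- atan_0. left. apply atan_increasing. lra. Qed.

Lemma atan_pos t : 0 < t -> 0 < atan t.
Proof. intros H. rewrite <- atan_0. apply atan_increasing. lra. Qed.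

Lemma Carg_range w : - PI < Carg w <= PI.
Proof.
  pose proof PI_RGT_0 as HPI.
  destruct w as [x y]. unfold Carg; cbn [fst snd].
  pose proof (atan_bound (y / x)) as Hb.
  destruct (Rlt_dec 0 x). lra.
  destruct (Rlt_dec x 0).
  - destruct (Rle_dec 0 y).
    + assert (atan (y / x) <= 0). apply atan_nonpos. unfold Rdiv.
      assert (/ x < 0) by (apply Rinv_lt_0_compat; lra). nra. lra.
    + assert (0 < atan (y / x)). apply atan_pos. unfold Rdiv.
      assert (/ x < 0) by (apply Rinv_lt_0_compat; lra). nra. lra.
  - destruct (Rlt_dec 0 y). lra. destruct (Rlt_dec y 0); lra.
Qed.

Lemma Cmod_pair x y : Cmod (x, y) = sqrt (x * x + y * y).
Proof. unfold Cmod; cbn [fst snd]. f_equal. ring. Qed.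

Lemma sqrt_scale x t : 0 < x -> sqrt (x * x + (t * x) * (t * x)) = x * sqrt (1 + t * t).
Proof.
  intros Hx. replace (x * x + (t * x) * (t * x)) with ((x * x) * (1 + t * t)) by ring.
  rewrite sqrt_mult. rewrite sqrt_square by lra. reflexivity.
  nra. nra.
Qed.

Lemma polar w : w <> RtoC 0 -> Cmod w * cos (Carg w) = fst w /\ Cmod w * sin (Carg w) = snd w.
Proof.
  destruct w as [x y]. intros Hw. unfold Carg; cbn [fst snd]. rewrite Cmod_pair.
  assert (Hs : 0 < sqrt (1 + (y / x) * (y / x))) by (apply sqrt_lt_R0; nra).
  pose proof (cos_atan (y / x)) as Hc. pose proof (sin_atan (y / x)) as Hsn.
  unfold Rsqr in Hc, Hsn.
  destruct (Rlt_dec 0 x).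
  - replace (sqrt (x * x + y * y)) with (x * sqrt (1 + (y / x) * (y / x))).
    2:{ rewrite <- sqrt_scale by lra. f_equal. field. lra. }
    rewrite Hc, Hsn. split; field; lra.
  - destruct (Rlt_dec x 0).
    + replace (sqrt (x * x + y * y)) with ((- x) * sqrt (1 + (y / x) * (y / x))).
      2:{ rewrite <- sqrt_scale by lra. f_equal. field. lra. }
      destruct (Rle_dec 0 y).
      * rewrite cos_plus, sin_plus, cos_PI, sin_PI, Hc, Hsn. split; field; lra.
      * rewrite cos_minus, sin_minus, cos_PI, sin_PI, Hc, Hsn. split; field; lra.
    + assert (x = 0) by lra. subst x.
      replace (0 * 0 + y * y) with (y * y) by ring. rewrite <- Rsqr_def, sqrt_Rsqr_abs.
      destruct (Rlt_dec 0 y).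
      * rewrite cos_PI2, sin_PI2, Rabs_pos_eq by lra. split; ring.
      * destruct (Rlt_dec y 0).
        -- rewrite cos_neg, sin_neg, cos_PI2, sin_PI2, Rabs_left by lra. split; ring.
        -- exfalso. apply Hw. assert (y = 0) by lra. subst. reflexivity.
Qed.

Lemma Carg_scale r x y : 0 < r -> Carg (r * x, r * y) = Carg (x, y).
Proof.
  intros Hr. unfold Carg; cbn [fst snd].
  replace (r * y / (r * x)) with (y / x).
  2:{ destruct (Req_dec x 0) as [->|Hx].
      - unfold Rdiv. rewrite Rmult_0_r, !Rinv_0. ring.
      - field. lra. }
  destruct (Rlt_dec 0 (r * x)); destruct (Rlt_dec 0 x); try (exfalso; nra); auto.
  destruct (Rlt_dec (r * x) 0); destruct (Rlt_dec x 0); try (exfalso; nra); auto.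
  - destruct (Rle_dec 0 (r * y)); destruct (Rle_dec 0 y); try (exfalso; nra); auto.
  - destruct (Rlt_dec 0 (r * y)); destruct (Rlt_dec 0 y); try (exfalso; nra); auto.
    destruct (Rlt_dec (r * y) 0); destruct (Rlt_dec y 0); try (exfalso; nra); auto.
Qed.

Lemma Carg_Cexp x y : - (PI / 2) < y <= PI / 2 -> Carg (Cexp (x, y)) = y.
Proof.
  intros Hy. unfold Cexp, Carg; cbn [fst snd].
  pose proof (exp_pos x) as Hex.
  destruct (Req_dec y (PI / 2)) as [->|Hne].
  - rewrite cos_PI2, sin_PI2, Rmult_0_r, Rmult_1_r.
    destruct (Rlt_dec 0 0). lra. destruct (Rlt_dec 0 0). lra.
    destruct (Rlt_dec 0 (exp x)). reflexivity. lra.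
  - assert (Hc : 0 < cos y) by (apply cos_gt_0; lra).
    destruct (Rlt_dec 0 (exp x * cos y)).
    + replace (exp x * sin y / (exp x * cos y)) with (tan y) by (unfold tan; field; lra).
      apply atan_tan. lra.
    + exfalso. apply n. nra.
Qed.

Lemma cpow_real w r : cpow w (RtoC r) = Cexp (r * ln (Cmod w), r * Carg w).
Proof. unfold cpow, Clog, Cmult, RtoC; cbn [fst snd]. f_equal. f_equal; ring. Qed.

Lemma Clog_Cexp a b : - (PI / 2) < b <= PI / 2 -> Clog (Cexp (a, b)) = (a, b).
Proof. intros H. unfold Clog. rewrite Cmod_Cexp, Carg_Cexp by auto. cbn [fst]. rewrite ln_exp. reflexivity. Qed.

Lemma Cexp_polar w : w <> RtoC 0 -> Cexp (ln (Cmod w), Carg w) = w.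
Proof.
  intros Hw. destruct (polar w Hw) as [H1 H2].
  assert (0 < Cmod w) by (apply Cmod_gt_0; auto).
  unfold Cexp; cbn [fst snd]. rewrite exp_ln by auto. rewrite H1, H2. destruct w; reflexivity.
Qed.

Lemma Cexp_pair_mult a b c d : Cmult (Cexp (a, b)) (Cexp (c, d)) = Cexp (a + c, b + d).
Proof. rewrite <- Cexp_plus. reflexivity. Qed.

Lemma part2 (q alpha : R) (z : C) : 0 < q < 1 -> (forall m : nat, alpha <> - INR m) -> z <> RtoC 0 ->
     phi nil (qpow q (RtoC alpha) :: nil) q z =
     Cmult (cpow (Cdiv (Copp z) (Cmult (RtoC ((q - 1) ^ 2)) (qpow q (RtoC alpha))))
                 (RtoC ((1 - alpha) / 2)))
       (Cmult (qGamma q (RtoC alpha))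
          (J2 (RtoC (alpha - 1))
              (Cmult (RtoC 2) (csqrt (Cdiv (Copp z) (qpow q (RtoC alpha))))) q)).
Proof.
  intros Hq Hal Hz.
  set (Q := exp (ln q * alpha)).
  assert (HQ : 0 < Q) by apply exp_pos.
  assert (EQ : qpow q (RtoC alpha) = RtoC Q) by apply qpow_RtoC.
  assert (Eqn1 : qpow q (Cplus (RtoC (alpha - 1)) (RtoC 1)) = RtoC Q).
  { replace (Cplus (RtoC (alpha - 1)) (RtoC 1)) with (RtoC alpha). exact EQ.
    unfold RtoC, Cplus; cbn; f_equal; ring. }
  assert (HQ0 : RtoC Q <> RtoC 0) by (intro H; injection H; lra).
  set (w := Cdiv (Copp z) (RtoC Q)).
  assert (Hw : w <> RtoC 0).
  { unfold w. intro H. apply Hz. replace z with (Copp (Cmult (Cdiv (Copp z) (RtoC Q)) (RtoC Q))) by (field; auto).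
    rewrite H. ring. }
  assert (Hmw : 0 < Cmod w) by (apply Cmod_gt_0; auto).
  set (L := ln (Cmod w)). set (th := Carg w).
  pose proof (Carg_range w) as Hth. fold th in Hth.
  set (rho := / ((q - 1) ^ 2)).
  assert (Hq1 : 0 < (q - 1) ^ 2) by (simpl; nra).
  assert (Hrho : 0 < rho) by (apply Rinv_0_lt_compat; auto).
  assert (Hlnrho : ln rho = - (2 * ln (1 - q))).
  { unfold rho. rewrite ln_Rinv by auto. replace ((q - 1) ^ 2) with ((1 - q) ^ 2) by ring.
    rewrite ln_pow by lra. simpl INR. ring. }
  rewrite EQ. fold w.
  replace (Cdiv (Copp z) (Cmult (RtoC ((q - 1) ^ 2)) (RtoC Q))) with (Cmult (RtoC rho) w).
  2:{ unfold w, rho. rewrite RtoC_inv by lra.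
      field. split; auto. intro H; injection H; lra. }
  rewrite cpow_real.
  assert (Hmu : Cmod (Cmult (RtoC rho) w) = rho * Cmod w).
  { rewrite Cmod_mult, Cmod_R, Rabs_pos_eq; lra. }
  rewrite Hmu, ln_mult by lra. fold L.
  replace (Carg (Cmult (RtoC rho) w)) with th.
  2:{ unfold th. replace (Cmult (RtoC rho) w) with ((rho * fst w, rho * snd w) : C)
        by (destruct w; unfold Cmult, RtoC; cbn; f_equal; ring).
      destruct w. rewrite Carg_scale; auto. }
  assert (Hsq : csqrt w = Cexp (1/2 * L, 1/2 * th)) by (unfold csqrt; rewrite cpow_real; reflexivity).
  rewrite Hsq.
  unfold qGamma, J2. rewrite Eqn1, EQ.
  replace (Cdiv (Cmult (RtoC 2) (Cexp (1 / 2 * L, 1 / 2 * th))) (RtoC 2)) with (Cexp (1 / 2 * L, 1 / 2 * th))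
    by (field; intro H; injection H; lra).
  rewrite cpow_real. rewrite Cmod_Cexp, Carg_Cexp by lra. cbn [fst]. rewrite ln_exp.
  replace (Cdiv (Copp (Cmult (RtoC Q) (Cmult (Cmult (RtoC 2) (Cexp (1 / 2 * L, 1 / 2 * th)))
      (Cmult (RtoC 2) (Cexp (1 / 2 * L, 1 / 2 * th)))))) (RtoC 4)) with z.
  2:{ replace (Cmult (Cmult (RtoC 2) (Cexp (1 / 2 * L, 1 / 2 * th))) (Cmult (RtoC 2) (Cexp (1 / 2 * L, 1 / 2 * th))))
        with (Cmult (RtoC 4) (Cmult (Cexp (1 / 2 * L, 1 / 2 * th)) (Cexp (1 / 2 * L, 1 / 2 * th)))).
      2:{ replace (RtoC 4) with (Cmult (RtoC 2) (RtoC 2)) by (unfold Cmult, RtoC; cbn; f_equal; ring). ring. }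
      rewrite Cexp_pair_mult. replace (1 / 2 * L + 1 / 2 * L) with L by field.
      replace (1 / 2 * th + 1 / 2 * th) with th by field. unfold L, th. rewrite Cexp_polar by auto.
      unfold w. field; repeat split; auto; try (intro H; injection H; lra). }
  replace (qpow (1 - q) (Cminus (RtoC 1) (RtoC alpha))) with (Cexp (ln (1 - q) * (1 - alpha), 0)).
  2:{ replace (Cminus (RtoC 1) (RtoC alpha)) with (RtoC (1 - alpha)) by (unfold Cminus, Cplus, Copp, RtoC; cbn; f_equal; ring).
      rewrite qpow_RtoC. rewrite <- Cexp_RtoC. reflexivity. }
  destruct (qpoch_inf_RtoC q q Hq ltac:(lra)) as [LA [HLA EA]].
  { intros j. assert (q * q ^ j < 1). { change (q * q ^ j) with (q ^ S j). apply pow_lt_1_compat; [lra|lia]. } lra. }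
  destruct (qpoch_inf_RtoC Q q Hq HQ) as [LB [HLB EB]].
  { intros j Hj. unfold Q in Hj.
    replace (q ^ j) with (exp (INR j * ln q)) in Hj by (rewrite <- ln_pow by lra; apply exp_ln; apply pow_lt; lra).
    rewrite <- exp_plus in Hj. rewrite <- exp_0 in Hj. apply exp_inv in Hj.
    assert (ln q < 0) by (rewrite <- ln_1; apply ln_increasing; lra).
    apply (Hal j). nra. }
  rewrite EA, EB.
  set (P := phi nil (RtoC Q :: nil) q z).
  set (E1 := Cexp ((1 - alpha) / 2 * (ln rho + L), (1 - alpha) / 2 * th)).
  set (E2 := Cexp (ln (1 - q) * (1 - alpha), 0)).
  set (E3 := Cexp ((alpha - 1) * (1 / 2 * L), (alpha - 1) * (1 / 2 * th))).
  assert (HA0 : RtoC LA <> RtoC 0) by (intro H; injection H; auto).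
  assert (HB0 : RtoC LB <> RtoC 0) by (intro H; injection H; auto).
  transitivity (Cmult (Cmult (Cdiv (RtoC LA) (RtoC LB)) (Cdiv (RtoC LB) (RtoC LA))) (Cmult (Cmult (Cmult E1 E2) E3) P)).
  2: ring.
  replace (Cmult (Cdiv (RtoC LA) (RtoC LB)) (Cdiv (RtoC LB) (RtoC LA))) with (RtoC 1) by (field; auto).
  unfold E1, E2, E3. rewrite !Cexp_pair_mult.
  replace ((1 - alpha) / 2 * (ln rho + L) + ln (1 - q) * (1 - alpha) + (alpha - 1) * (1 / 2 * L)) with 0
    by (rewrite Hlnrho; field).
  replace ((1 - alpha) / 2 * th + 0 + (alpha - 1) * (1 / 2 * th)) with 0 by field.
  change (0, 0) with (RtoC 0). rewrite Cexp_0. ring.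
Qed.

Fixpoint sfrom (f : nat -> R) (a p : nat) : R :=
  match p with O => 0 | S p' => sfrom f a p' + f (a + p')%nat end.

Lemma sfrom_le f g a p : (forall k, f k <= g k) -> sfrom f a p <= sfrom g a p.
Proof. intros H. induction p; simpl. lra. specialize (H (a + p)%nat). lra. Qed.

Lemma sfrom_plus f g a p : sfrom (fun k => f k + g k) a p = sfrom f a p + sfrom g a p.
Proof. induction p; simpl. ring. rewrite IHp. ring. Qed.

Lemma sfrom_nonneg f a p : (forall k, 0 <= f k) -> 0 <= sfrom f a p.
Proof. intros H. induction p; simpl. lra. specialize (H (a + p)%nat). lra. Qed.

Lemma Cpsum_tail u M p : Cmod (Cminus (Cpsum u (M + p)) (Cpsum u M)) <= sfrom (fun k => Cmod (u k)) (S M) p.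
Proof.
  induction p; simpl sfrom.
  - rewrite Nat.add_0_r. replace (Cminus (Cpsum u M) (Cpsum u M)) with (RtoC 0) by ring. rewrite Cmod_0. lra.
  - rewrite Nat.add_succ_r. simpl Cpsum.
    replace (Cminus (Cplus (Cpsum u (M + p)) (u (S (M + p)))) (Cpsum u M)) with
      (Cplus (Cminus (Cpsum u (M + p)) (Cpsum u M)) (u (S (M + p)))) by ring.
    eapply Rle_trans. apply Cmod_triangle. replace (S M + p)%nat with (S (M + p)) by lia. lra.
Qed.

Lemma Cpsum_tail2 u v M p : Cmod (Cminus (Cpsum u (M + p)) (Cpsum v (M + p))) <=
  Cmod (Cminus (Cpsum u M) (Cpsum v M)) + sfrom (fun k => Cmod (u k) + Cmod (v k)) (S M) p.
Proof.
  induction p; simpl sfrom.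
  - rewrite Nat.add_0_r. lra.
  - rewrite Nat.add_succ_r. simpl Cpsum.
    replace (Cminus (Cplus (Cpsum u (M + p)) (u (S (M + p)))) (Cplus (Cpsum v (M + p)) (v (S (M + p))))) with
      (Cplus (Cminus (Cpsum u (M + p)) (Cpsum v (M + p))) (Cminus (u (S (M + p))) (v (S (M + p))))) by ring.
    eapply Rle_trans. apply Cmod_triangle. replace (S M + p)%nat with (S (M + p)) by lia.
    pose proof (Cmod_triangle (u (S (M + p))) (Copp (v (S (M + p))))). rewrite Cmod_opp in H.
    unfold Cminus at 2. lra.
Qed.

Lemma Cpsum_head u v M c : (forall k, (k <= M)%nat -> Cmod (Cminus (u k) (v k)) <= c) ->
  Cmod (Cminus (Cpsum u M) (Cpsum v M)) <= INR (S M) * c.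
Proof.
  intros H. induction M; simpl Cpsum.
  - simpl INR. rewrite Rmult_1_l. apply H; lia.
  - replace (Cminus (Cplus (Cpsum u M) (u (S M))) (Cplus (Cpsum v M) (v (S M)))) with
      (Cplus (Cminus (Cpsum u M) (Cpsum v M)) (Cminus (u (S M)) (v (S M)))) by ring.
    eapply Rle_trans. apply Cmod_triangle.
    rewrite S_INR. specialize (IHM (fun k Hk => H k ltac:(lia))). specialize (H (S M) (le_n _)). lra.
Qed.

Lemma cauchy_CL (u : nat -> C) :
  (forall eps, 0 < eps -> exists N, forall n, (N <= n)%nat -> Cmod (Cminus (u n) (u N)) < eps) ->
  CL u (Clim u).
Proof.
  intros H. cut (exists L, CL u L).
  { intros [L HL]. rewrite (Clim_CL u L HL). exact HL. }
  assert (HF : ProperFilter (filtermap u eventually)).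
  { apply filtermap_proper_filter. apply eventually_filter. }
  assert (Hc : cauchy (filtermap u eventually)).
  { intros e. destruct (H e (cond_pos e)) as [N HN]. exists (u N). exists N. intros n Hn.
    specialize (HN n Hn). split; simpl.
    - eapply Rle_lt_trans; [|exact HN].
      eapply Rle_trans; [|apply Rmax_Cmod]. apply Rmax_l.
    - eapply Rle_lt_trans; [|exact HN].
      eapply Rle_trans; [|apply Rmax_Cmod]. apply Rmax_r. }
  exists (@lim C_CompleteNormedModule (filtermap u eventually)).
  intros eps He.
  pose proof (@complete_cauchy C_CompleteNormedModule (filtermap u eventually) HF Hc (mkposreal (eps / 2) ltac:(lra))) as HN.
  set (L := @lim C_CompleteNormedModule (filtermap u eventually)) in *. clearbody L.
  destruct HN as [N HN].
  exists N. intros n Hn. specialize (HN n Hn). destruct HN as [H1 H2].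
  change (Rabs (fst (u n) + - fst L) < eps / 2) in H1.
  change (Rabs (snd (u n) + - snd L) < eps / 2) in H2.
  eapply Rle_lt_trans. apply Cmod_2Rmax.
  assert (Hs : sqrt 2 < 2).
  { rewrite <- (sqrt_square 2) at 2 by lra. apply sqrt_lt_1; lra. }
  assert (Rmax (Rabs (fst (Cminus (u n) L))) (Rabs (snd (Cminus (u n) L))) < eps / 2).
  { apply Rmax_lub_lt.
    - exact H1.
    - exact H2. }
  pose proof (Rmax_l (Rabs (fst (Cminus (u n) L))) (Rabs (snd (Cminus (u n) L)))).
  pose proof (Rabs_pos (fst (Cminus (u n) L))).
  nra.
Qed.

Lemma dom_cauchy (u : nat -> C) (D : nat -> R) :
  (forall k, Cmod (u k) <= D k) ->
  (forall eps, 0 < eps -> exists M, forall p, sfrom D (S M) p <= eps) ->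
  CL (Cpsum u) (Cseries u).
Proof.
  intros Hd Ht. apply cauchy_CL. intros eps He.
  destruct (Ht (eps / 2) ltac:(lra)) as [M HM]. exists M. intros n Hn.
  replace n with (M + (n - M))%nat by lia.
  eapply Rle_lt_trans. apply Cpsum_tail.
  eapply Rle_lt_trans. apply sfrom_le. exact Hd. specialize (HM (n - M)%nat). lra.
Qed.

Definition hh (k : nat) : nat := Nat.div (k * (k - 1)) 2.

Lemma hh_S k : hh (S k) = (hh k + k)%nat.
Proof.
  unfold hh. replace (S k * (S k - 1))%nat with (k * (k - 1) + k * 2)%nat.
  rewrite Nat.div_add by lia. reflexivity.
  destruct k. simpl. reflexivity. simpl. nia.
Qed.

Definition Dfun (q G : R) (k : nat) : R := q ^ hh k * G ^ k.

Lemma Dfun_nonneg q G k : 0 < q -> 0 <= G -> 0 <= Dfun q G k.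
Proof. intros. unfold Dfun. apply Rmult_le_pos; apply pow_le; lra. Qed.

Lemma tailD q G : 0 < q < 1 -> 0 <= G ->
  forall eps, 0 < eps -> exists M, forall p, sfrom (Dfun q G) (S M) p <= eps.
Proof.
  intros Hq HG eps He.
  destruct (exists_small_pow q (/ (2 * (G + 1))) Hq) as [K HK].
  { apply Rinv_0_lt_compat; lra. }
  assert (Hstep : forall k, (K <= k)%nat -> Dfun q G (S k) <= Dfun q G k / 2).
  { intros k Hk. unfold Dfun. rewrite hh_S, pow_add. simpl (G ^ S k).
    pose proof (pow_decr q K k ltac:(lra) Hk).
    assert (q ^ k * G <= 1 / 2).
    { assert (q ^ k <= / (2 * (G + 1))) by lra.
      apply Rle_trans with (/ (2 * (G + 1)) * G). apply Rmult_le_compat_r; lra.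
      apply Rmult_le_reg_l with (2 * (G + 1)). lra.
      rewrite <- Rmult_assoc, Rinv_r by lra. lra. }
    pose proof (pow_le q (hh k) ltac:(lra)). pose proof (pow_le G k HG).
    assert (0 <= q ^ hh k * G ^ k) by (apply Rmult_le_pos; auto).
    replace (q ^ hh k * q ^ k * (G * G ^ k)) with ((q ^ hh k * G ^ k) * (q ^ k * G)) by ring.
    nra. }
  assert (Hinv : forall a p, (K <= a)%nat -> sfrom (Dfun q G) a p <= 2 * Dfun q G a - 2 * Dfun q G (a + p)).
  { intros a p Ha. induction p; simpl sfrom.
    - rewrite Nat.add_0_r. lra.
    - rewrite Nat.add_succ_r. specialize (Hstep (a + p)%nat ltac:(lia)). lra. }
  assert (Hgeo : forall i, Dfun q G (K + i) <= Dfun q G K * (1/2) ^ i).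
  { induction i. rewrite Nat.add_0_r. simpl. lra.
    rewrite Nat.add_succ_r. specialize (Hstep (K + i)%nat ltac:(lia)). simpl pow. lra. }
  assert (HDK := Dfun_nonneg q G K ltac:(lra) HG).
  destruct (pow_lt_1_zero (1/2) ltac:(rewrite Rabs_pos_eq; lra) (eps / (2 * Dfun q G K + 1)) ltac:(apply Rdiv_lt_0_compat; lra)) as [I HI].
  specialize (HI (S I) ltac:(lia)). rewrite Rabs_pos_eq in HI by (apply pow_le; lra).
  exists (K + I)%nat. intros p.
  eapply Rle_trans. apply Hinv. lia.
  pose proof (Dfun_nonneg q G (S (K + I) + p) ltac:(lra) HG).
  replace (S (K + I)) with (K + S I)%nat by lia.
  specialize (Hgeo (S I)).
  assert (0 <= (1/2) ^ S I) by (apply pow_le; lra).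
  assert ((1/2) ^ S I * (2 * Dfun q G K + 1) <= eps).
  { apply Rmult_le_reg_r with (/ (2 * Dfun q G K + 1)). apply Rinv_0_lt_compat; lra.
    rewrite Rmult_assoc, Rinv_r by lra. unfold Rdiv in HI. lra. }
  assert (2 * (Dfun q G K * (1/2) ^ S I) <= eps) by nra.
  pose proof (Dfun_nonneg q G (K + S I + p) ltac:(lra) HG).
  lra.
Qed.

Lemma fin_N (P : nat -> nat -> Prop) m :
  (forall j, (j < m)%nat -> exists N, forall n, (N <= n)%nat -> P j n) ->
  exists N, forall n, (N <= n)%nat -> forall j, (j < m)%nat -> P j n.
Proof.
  induction m; intros H.
  - exists O. intros. lia.
  - destruct IHm as [N1 H1]. intros j Hj; apply H; lia.
    destruct (H m (le_n _)) as [N2 H2].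
    exists (max N1 N2). intros n Hn j Hj.
    destruct (Nat.eq_dec j m) as [->|Hne]. apply H2; lia. apply H1; lia.
Qed.

Lemma fin_max (f : nat -> R) m : exists B, forall j, (j < m)%nat -> f j <= B.
Proof.
  induction m.
  - exists 0. intros; lia.
  - destruct IHm as [B HB]. exists (Rmax B (f m)). intros j Hj.
    destruct (Nat.eq_dec j m) as [->|Hne]. apply Rmax_r.
    eapply Rle_trans. apply HB; lia. apply Rmax_l.
Qed.

Lemma fin_min_pos (f : nat -> R) m : (forall j, (j < m)%nat -> 0 < f j) ->
  exists d, 0 < d /\ forall j, (j < m)%nat -> d <= f j.
Proof.
  induction m; intros H.
  - exists 1. split. lra. intros; lia.
  - destruct IHm as [d [Hd HB]]. intros; apply H; lia.
    exists (Rmin d (f m)). split. apply Rmin_pos; auto. intros j Hj.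
    destruct (Nat.eq_dec j m) as [->|Hne]. apply Rmin_r.
    eapply Rle_trans. apply Rmin_l. apply HB; lia.
Qed.

Lemma unif_main (T : nat -> C -> nat -> C) (Tinf : C -> nat -> C) (X : nat -> nat -> C) (Y : nat -> C)
  (D : nat -> R) (N0 : nat) (R : R) :
  0 <= R ->
  (forall n z k, T n z k = Cmult (Cpow z k) (X n k)) ->
  (forall z k, Tinf z k = Cmult (Cpow z k) (Y k)) ->
  (forall k, CL (fun n => X n k) (Y k)) ->
  (forall n z k, (N0 <= n)%nat -> Cmod z <= R -> Cmod (T n z k) <= D k) ->
  (forall z k, Cmod z <= R -> Cmod (Tinf z k) <= D k) ->
  (forall eps, 0 < eps -> exists M, forall p, sfrom D (S M) p <= eps) ->
  forall eps, 0 < eps -> exists N, forall n, (N <= n)%nat -> forall z, Cmod z <= R ->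
    Cmod (Cminus (Cseries (T n z)) (Cseries (Tinf z))) < eps.
Proof.
  intros HR HT HTi HX HD HDi Htail eps He.
  destruct (Htail (eps / 8) ltac:(lra)) as [M HM].
  set (c := eps / (8 * INR (S M))).
  assert (HSM : 0 < INR (S M)) by (apply lt_0_INR; lia).
  assert (Hc : 0 < c) by (unfold c; apply Rdiv_lt_0_compat; lra).
  destruct (fin_N (fun k n => Cmod (Cminus (X n k) (Y k)) < c / (R ^ k + 1)) (S M)) as [N1 HN1].
  { intros k Hk. apply HX. apply Rdiv_lt_0_compat; auto. pose proof (pow_le R k HR). lra. }
  exists (max N0 N1). intros n Hn z Hz.
  assert (HDn : forall k, Cmod (T n z k) <= D k) by (intros; apply HD; auto; lia).
  assert (HDz : forall k, Cmod (Tinf z k) <= D k) by (intros; apply HDi; auto).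
  pose proof (dom_cauchy (T n z) D HDn Htail) as C1.
  pose proof (dom_cauchy (Tinf z) D HDz Htail) as C2.
  destruct (C1 (eps / 4) ltac:(lra)) as [P1 HP1].
  destruct (C2 (eps / 4) ltac:(lra)) as [P2 HP2].
  set (P := (P1 + P2)%nat).
  specialize (HP1 (M + P)%nat ltac:(lia)). specialize (HP2 (M + P)%nat ltac:(lia)).
  assert (Hmid : Cmod (Cminus (Cpsum (T n z) (M + P)) (Cpsum (Tinf z) (M + P))) <= 3 * eps / 8).
  { eapply Rle_trans. apply Cpsum_tail2.
    assert (H1 : Cmod (Cminus (Cpsum (T n z) M) (Cpsum (Tinf z) M)) <= INR (S M) * c).
    { apply Cpsum_head. intros k Hk. rewrite HT, HTi.
      replace (Cminus (Cmult (Cpow z k) (X n k)) (Cmult (Cpow z k) (Y k))) with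
        (Cmult (Cpow z k) (Cminus (X n k) (Y k))) by ring.
      rewrite Cmod_mult, Cmod_pow.
      specialize (HN1 n ltac:(lia) k ltac:(lia)). simpl in HN1.
      pose proof (pow_le R k HR).
      assert (Cmod z ^ k <= R ^ k) by (apply pow_incr; split; auto; apply Cmod_ge_0).
      pose proof (Cmod_ge_0 (Cminus (X n k) (Y k))).
      pose proof (pow_le (Cmod z) k (Cmod_ge_0 z)).
      assert (Cmod (Cminus (X n k) (Y k)) * (R ^ k + 1) < c).
      { apply Rmult_lt_reg_r with (/ (R ^ k + 1)). apply Rinv_0_lt_compat; lra.
        rewrite Rmult_assoc, Rinv_r by lra. unfold Rdiv in HN1. lra. }
      nra. }
    assert (H2 : sfrom (fun k => Cmod (T n z k) + Cmod (Tinf z k)) (S M) P <= 2 * (eps / 8)).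
    { eapply Rle_trans. apply sfrom_le with (g := fun k => D k + D k). intros k.
      specialize (HDn k); specialize (HDz k). lra.
      rewrite sfrom_plus. specialize (HM P). lra. }
    assert (INR (S M) * c = eps / 8) by (unfold c; field; lra).
    lra. }
  replace (Cminus (Cseries (T n z)) (Cseries (Tinf z))) with
    (Cplus (Cplus (Copp (Cminus (Cpsum (T n z) (M + P)) (Cseries (T n z))))
      (Cminus (Cpsum (T n z) (M + P)) (Cpsum (Tinf z) (M + P))))
      (Cminus (Cpsum (Tinf z) (M + P)) (Cseries (Tinf z)))) by ring.
  eapply Rle_lt_trans. apply Cmod_triangle.
  eapply Rle_lt_trans. apply Rplus_le_compat_r. apply Cmod_triangle.
  rewrite Cmod_opp. lra.
Qed.

Lemma exp_mult_INR x n : exp (x * INR n) = exp x ^ n.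
Proof. induction n. simpl. rewrite Rmult_0_r, exp_0. reflexivity.
  rewrite S_INR, Rmult_plus_distr_l, Rmult_1_r, exp_plus, IHn. simpl. ring. Qed.

Lemma pow_exp q n : 0 < q -> q ^ n = exp (ln q * INR n).
Proof. intros Hq. rewrite exp_mult_INR, exp_ln by auto. reflexivity. Qed.

Lemma qpow_neg q n : 0 < q -> qpow q (RtoC (- INR n)) = RtoC (/ q ^ n).
Proof.
  intros Hq. rewrite qpow_RtoC. f_equal. rewrite (pow_exp q n Hq), <- exp_Ropp. f_equal. ring.
Qed.

Definition fa (q : R) (a : nat -> R) (b : nat -> C) (n j : nat) : C :=
  qpow q (Cplus (RtoC (a j * INR n)) (b j)).

Lemma Cmod_fa q a b n j : Cmod (fa q a b n j) = exp (ln q * fst (b j)) * exp (ln q * a j) ^ n.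
Proof.
  unfold fa. rewrite Cmod_qpow. simpl fst. rewrite <- exp_mult_INR, <- exp_plus. f_equal. ring.
Qed.

Lemma exp_lnq_lt1 q x : 0 < q < 1 -> 0 < x -> 0 < exp (ln q * x) < 1.
Proof.
  intros Hq Hx. split. apply exp_pos. rewrite <- exp_0. apply exp_increasing.
  assert (ln q < 0) by (rewrite <- ln_1; apply ln_increasing; lra). nra.
Qed.

Lemma Cmod_fa_le q a b n j : 0 < q < 1 -> 0 < a j -> Cmod (fa q a b n j) <= exp (ln q * fst (b j)).
Proof.
  intros Hq Ha. rewrite Cmod_fa. pose proof (exp_lnq_lt1 q (a j) Hq Ha).
  pose proof (exp_pos (ln q * fst (b j))).
  assert (exp (ln q * a j) ^ n <= 1) by (apply pow_le1; lra). nra.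
Qed.

Lemma CL_fa q a b j : 0 < q < 1 -> 0 < a j -> CL (fun n => fa q a b n j) (RtoC 0).
Proof.
  intros Hq Ha eps He. pose proof (exp_lnq_lt1 q (a j) Hq Ha) as Hr.
  set (E := exp (ln q * fst (b j))). assert (HE : 0 < E) by apply exp_pos.
  destruct (pow_lt_1_zero (exp (ln q * a j)) ltac:(rewrite Rabs_pos_eq; lra) (eps / E) ltac:(apply Rdiv_lt_0_compat; lra)) as [N HN].
  exists N. intros n Hn. replace (Cminus (fa q a b n j) (RtoC 0)) with (fa q a b n j) by ring.
  rewrite Cmod_fa. fold E. specialize (HN n Hn). rewrite Rabs_pos_eq in HN by (apply pow_le; lra).
  apply Rmult_lt_reg_l with (/ E). apply Rinv_0_lt_compat; auto.
  rewrite <- Rmult_assoc, Rinv_l, Rmult_1_l by lra. unfold Rdiv in HN. lra.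
Qed.

Lemma eventually_fa_small q a b j : 0 < q < 1 -> 0 < a j ->
  exists N, forall n, (N <= n)%nat -> Cmod (fa q a b n j) <= 1/2.
Proof.
  intros Hq Ha. destruct (CL_fa q a b j Hq Ha (1/2) ltac:(lra)) as [N HN]. exists N. intros n Hn.
  specialize (HN n Hn). replace (Cminus (fa q a b n j) (RtoC 0)) with (fa q a b n j) in HN by ring. lra.
Qed.

Fixpoint rq (q : R) (n k : nat) : R :=
  match k with O => 1 | S k' => rq q n k' * (q ^ n - q ^ k') end.

Lemma rp_neg q n k : 0 < q -> rp (/ q ^ n) q k * (q ^ n) ^ k = rq q n k.
Proof.
  intros Hq. assert (0 < q ^ n) by (apply pow_lt; auto).
  induction k. simpl. ring. simpl rp; simpl rq. rewrite <- IHk. simpl pow. field. lra.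
Qed.

Lemma qpoch_neg q n k : 0 < q ->
  qpoch (qpow q (RtoC (- INR n))) q k = Cmult (RtoC (rq q n k)) (Cinv (RtoC ((q ^ n) ^ k))).
Proof.
  intros Hq. rewrite qpow_neg, qpoch_RtoC by auto. rewrite <- (rp_neg q n k Hq).
  assert (0 < (q ^ n) ^ k) by (apply pow_lt; apply pow_lt; auto).
  rewrite RtoC_mult. field. intro H'; injection H'; lra.
Qed.

Lemma rq_le1 q n k : 0 < q <= 1 -> Rabs (rq q n k) <= 1.
Proof.
  intros Hq. induction k. simpl. rewrite Rabs_R1. lra.
  simpl rq. rewrite Rabs_mult.
  assert (0 < q ^ n <= 1) by (split; [apply pow_lt; lra|apply pow_le1; lra]).
  assert (0 < q ^ k <= 1) by (split; [apply pow_lt; lra|apply pow_le1; lra]).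
  assert (Rabs (q ^ n - q ^ k) <= 1) by (apply Rabs_le; lra).
  pose proof (Rabs_pos (rq q n k)). pose proof (Rabs_pos (q ^ n - q ^ k)). nra.
Qed.

Definition sgk (q : R) (k : nat) : R := (-1) ^ k * q ^ hh k.

Lemma sgk_S q k : sgk q (S k) = sgk q k * (- q ^ k).
Proof. unfold sgk. rewrite hh_S, pow_add. simpl. ring. Qed.

Lemma CL_rq q k : 0 < q < 1 -> CL (fun n => RtoC (rq q n k)) (RtoC (sgk q k)).
Proof.
  intros Hq. induction k.
  - apply CL_ext with (fun _ => RtoC 1). reflexivity. unfold sgk. simpl. replace (1 * 1) with 1 by ring. apply CL_const.
  - apply (CL_mult' (fun n => RtoC (rq q n k)) (fun n => RtoC (q ^ n - q ^ k)) _ (RtoC (sgk q k)) (RtoC (- q ^ k))); auto.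
    + apply CL_RtoC. intros eps He.
      destruct (pow_lt_1_zero q ltac:(rewrite Rabs_pos_eq; lra) eps He) as [N HN].
      exists N. intros n Hn. replace (q ^ n - q ^ k - - q ^ k) with (q ^ n) by ring. auto.
    + rewrite sgk_S, RtoC_mult. reflexivity.
    + intros n. simpl rq. rewrite RtoC_mult. reflexivity.
Qed.

Lemma compact_bounded K : compactC K -> exists R, 0 <= R /\ forall z, K z -> Cmod z <= R.
Proof.
  intros HK.
  destruct (HK nat (fun m z => Cmod z < INR m)) as [l Hl].
  - intros m x Hx. exists (mkposreal ((INR m - Cmod x) / 2) ltac:(lra)). intros y [H1 H2]. change C in x, y.
    change (Rabs (fst y + - fst x) < (INR m - Cmod x) / 2) in H1.
    change (Rabs (snd y + - snd x) < (INR m - Cmod x) / 2) in H2.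
    pose proof (Cmod_triangle x (Cminus y x)). replace (Cplus x (Cminus y x)) with y in H by ring.
    pose proof (Cmod_2Rmax (Cminus y x)).
    assert (Rmax (Rabs (fst (Cminus y x))) (Rabs (snd (Cminus y x))) < (INR m - Cmod x) / 2)
      by (apply Rmax_lub_lt; simpl; auto).
    assert (Hs : sqrt 2 < 2).
    { rewrite <- (sqrt_square 2) at 2 by lra. apply sqrt_lt_1; lra. }
    pose proof (Rmax_l (Rabs (fst (Cminus y x))) (Rabs (snd (Cminus y x)))).
    pose proof (Rabs_pos (fst (Cminus y x))). nra.
  - intros z _. destruct (archimed (Cmod z)) as [H1 _].
    exists (Z.to_nat (up (Cmod z))). rewrite INR_IZR_INZ, Z2Nat.id. auto.
    apply le_IZR. pose proof (Cmod_ge_0 z). simpl. lra.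
  - assert (Hm : exists R, 0 <= R /\ forall i, In i l -> INR i <= R).
    { clear Hl. induction l as [|i l IH]. exists 0. split. lra. intros i [].
      destruct IH as [R [HR HR']]. exists (Rmax R (INR i)). split. eapply Rle_trans; [exact HR|apply Rmax_l].
      intros j [->|Hj]. apply Rmax_r. eapply Rle_trans; [apply HR'; auto|apply Rmax_l]. }
    destruct Hm as [R [HR HR']]. exists R. split; auto. intros z Hz.
    destruct (Hl z Hz) as [i [Hi Hi']]. specialize (HR' i Hi). lra.
Qed.

Definition Abl q (a : nat -> R) (b : nat -> C) m n k := qpoch_list (map (fa q a b n) (seq 0 m)) q k.
Definition Xn q Q a b c d m n k :=
  Cmult (Cmult (RtoC (rq q n k)) (Abl q a b m n k))
   (Cmult (Cinv (Cmult (qpoch (RtoC Q) q k) (Abl q c d m n k)))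
      (Cmult (RtoC (sgk q k)) (Cinv (qpoch (RtoC q) q k)))).
Definition Yk q Q k :=
  Cmult (Cinv (Cmult (qpoch (RtoC Q) q k) (RtoC 1)))
    (Cmult (RtoC (sgk q k * sgk q k)) (Cinv (qpoch (RtoC q) q k))).

Lemma term_eq q Q (a c : nat -> R) (b d : nat -> C) m n z k : 0 < q ->
  phi_term (qpow q (RtoC (- INR n)) :: map (fun j => qpow q (Cplus (RtoC (a j * INR n)) (b j))) (seq 0 m))
    (RtoC Q :: map (fun j => qpow q (Cplus (RtoC (c j * INR n)) (d j))) (seq 0 m)) q
    (Cmult (RtoC (q ^ n)) z) k
  = Cmult (Cpow z k) (Xn q Q a b c d m n k).
Proof.
  intros Hq. unfold phi_term. cbv zeta.
  simpl length. rewrite !length_map, length_seq.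
  replace (1 + Z.of_nat (S m) - Z.of_nat (S m))%Z with 1%Z by lia.
  rewrite powerRZ_1.
  rewrite !qpoch_list_cons. rewrite qpoch_neg by auto.
  unfold Xn, Abl, fa. change ((-1) ^ k * q ^ Nat.div (k * (k - 1)) 2) with (sgk q k).
  rewrite Cpow_mult_l, <- RtoC_pow.
  assert (HW : RtoC ((q ^ n) ^ k) <> RtoC 0).
  { intro H'; injection H'. assert (0 < (q ^ n) ^ k) by (apply pow_lt; apply pow_lt; auto). lra. }
  unfold Cdiv.
  set (W := RtoC ((q ^ n) ^ k)) in *.
  set (A1 := qpoch_list (map (fun j : nat => qpow q (Cplus (RtoC (a j * INR n)) (b j))) (seq 0 m)) q k).
  set (A2 := qpoch_list (map (fun j : nat => qpow q (Cplus (RtoC (c j * INR n)) (d j))) (seq 0 m)) q k).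
  transitivity (Cmult (Cmult (Cpow z k) (Cmult (Cmult (RtoC (rq q n k)) A1)
   (Cmult (Cinv (Cmult (qpoch (RtoC Q) q k) A2))
      (Cmult (RtoC (sgk q k)) (Cinv (qpoch (RtoC q) q k)))))) (Cmult W (Cinv W))).
  set (ZK := Cpow z k). ring. rewrite Cinv_r by auto. ring.
Qed.

Lemma term_inf_eq q Q z k :
  phi_term nil (RtoC Q :: nil) q z k = Cmult (Cpow z k) (Yk q Q k).
Proof.
  unfold phi_term, Yk. cbv zeta. simpl length.
  replace (powerRZ ((-1) ^ k * q ^ Nat.div (k * (k - 1)) 2) (1 + Z.of_nat 1 - Z.of_nat 0)) with (sgk q k * sgk q k)
    by (unfold sgk, hh; simpl; ring).
  rewrite qpoch_list_cons. unfold qpoch_list at 1 2. simpl fold_right. unfold Cdiv.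
  set (ZK := Cpow z k). ring.
Qed.


Lemma CL_Abl q a b m k : 0 < q < 1 -> (forall j, (j < m)%nat -> 0 < a j) ->
  CL (fun n => Abl q a b m n k) (RtoC 1).
Proof.
  intros Hq Ha. unfold Abl. apply (CL_qpoch_list (fa q a b)).
  intros j Hj. apply in_seq in Hj. apply CL_qpoch. apply CL_fa; auto. apply Ha. lia.
Qed.

Lemma CL_X q Q a b c d m k : 0 < q < 1 ->
  (forall j, (j < m)%nat -> 0 < a j /\ 0 < c j) -> qpoch (RtoC Q) q k <> RtoC 0 ->
  CL (fun n => Xn q Q a b c d m n k) (Yk q Q k).
Proof.
  intros Hq Hac HQ.
  set (S := Cmult (RtoC (sgk q k)) (Cinv (qpoch (RtoC q) q k))).
  apply (CL_mult' (fun n => Cmult (RtoC (rq q n k)) (Abl q a b m n k))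
                  (fun n => Cmult (Cinv (Cmult (qpoch (RtoC Q) q k) (Abl q c d m n k))) S) _
                  (Cmult (RtoC (sgk q k)) (RtoC 1)) (Cmult (Cinv (Cmult (qpoch (RtoC Q) q k) (RtoC 1))) S)).
  - apply (CL_mult' (fun n => RtoC (rq q n k)) (fun n => Abl q a b m n k) _ (RtoC (sgk q k)) (RtoC 1)).
    apply CL_rq; auto. apply CL_Abl; auto. intros j Hj; apply Hac; auto. reflexivity. intros; reflexivity.
  - apply (CL_mult' (fun n => Cinv (Cmult (qpoch (RtoC Q) q k) (Abl q c d m n k))) (fun _ => S) _
       (Cinv (Cmult (qpoch (RtoC Q) q k) (RtoC 1))) S).
    apply CL_inv. rewrite Cmult_1_r. auto.
    apply (CL_mult' (fun _ => qpoch (RtoC Q) q k) (fun n => Abl q c d m n k) _ (qpoch (RtoC Q) q k) (RtoC 1)).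
    apply CL_const. apply CL_Abl; auto. intros j Hj; apply Hac; auto. reflexivity. intros; reflexivity.
    apply CL_const. reflexivity. intros; reflexivity.
  - unfold Yk, S. rewrite RtoC_mult. ring.
  - intros; reflexivity.
Qed.

Lemma factor_ge x q j : 0 <= q ^ j ->
  1 - Cmod x * q ^ j <= Cmod (Cminus (RtoC 1) (Cmult x (RtoC (q ^ j)))).
Proof.
  intros H. pose proof (Cmod_triangle (Cminus (RtoC 1) (Cmult x (RtoC (q ^ j)))) (Cmult x (RtoC (q ^ j)))) as H0.
  replace (Cplus (Cminus (RtoC 1) (Cmult x (RtoC (q ^ j)))) (Cmult x (RtoC (q ^ j)))) with (RtoC 1) in H0 by ring.
  rewrite Cmod_1 in H0. rewrite Cmod_mult, Cmod_R, Rabs_pos_eq in H0 by auto. lra.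
Qed.

Lemma Qq_ge q k : 0 < q < 1 -> (1 - q) ^ k <= Cmod (qpoch (RtoC q) q k).
Proof.
  intros Hq. apply Cmod_qpoch_ge. lra. intros j.
  eapply Rle_trans; [|apply factor_ge]. rewrite Cmod_R, Rabs_pos_eq by lra.
  assert (q ^ j <= 1) by (apply pow_le1; lra). nra. apply pow_le; lra.
Qed.

Lemma Abl_le q a b m n k B : 0 < q < 1 -> (forall j, (j < m)%nat -> Cmod (fa q a b n j) <= B) ->
  Cmod (Abl q a b m n k) <= ((1 + B) ^ k) ^ m.
Proof.
  intros Hq HB. unfold Abl. replace m with (length (map (fa q a b n) (seq 0 m))) at 2
    by (rewrite length_map, length_seq; auto).
  apply qpoch_list_le. intros x Hx. apply in_map_iff in Hx. destruct Hx as [j [<- Hj]].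
  apply in_seq in Hj. eapply Rle_trans. apply Cmod_qpoch_le. lra.
  apply pow_incr. split. pose proof (Cmod_ge_0 (fa q a b n j)); lra. specialize (HB j ltac:(lia)). lra.
Qed.

Lemma Abl_ge q c d m n k : 0 < q < 1 -> (forall j, (j < m)%nat -> Cmod (fa q c d n j) <= 1/2) ->
  ((1/2) ^ k) ^ m <= Cmod (Abl q c d m n k).
Proof.
  intros Hq HB. unfold Abl. replace m with (length (map (fa q c d n) (seq 0 m))) at 1
    by (rewrite length_map, length_seq; auto).
  apply qpoch_list_ge. apply pow_le; lra.
  intros x Hx. apply in_map_iff in Hx. destruct Hx as [j [<- Hj]].
  apply in_seq in Hj. apply Cmod_qpoch_ge. lra. intros j'.
  eapply Rle_trans; [|apply factor_ge]. specialize (HB j ltac:(lia)).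
  assert (q ^ j' <= 1) by (apply pow_le1; lra). assert (0 <= q ^ j') by (apply pow_le; lra).
  pose proof (Cmod_ge_0 (fa q c d n j)). nra. apply pow_le; lra.
Qed.

Lemma pow_swap x k m : (x ^ k) ^ m = (x ^ m) ^ k.
Proof. rewrite <- !pow_mult, Nat.mul_comm. reflexivity. Qed.

Lemma Rabs_sgk q k : 0 < q -> Rabs (sgk q k) = q ^ hh k.
Proof. intros Hq. unfold sgk. rewrite Rabs_mult, pow_1_abs, Rabs_pos_eq. ring. apply pow_le; lra. Qed.

Lemma Dfun_eq q R Y dl k : 0 < dl -> q < 1 ->
  Dfun q (R * Y * / dl * / (1 - q)) k = q ^ hh k * (R ^ k * Y ^ k * / dl ^ k * / (1 - q) ^ k).
Proof.
  intros Hd Hq. unfold Dfun. rewrite !Rpow_mult_distr, !pow_inv. reflexivity.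
Qed.

Lemma bound_T q Q a b c d m n k z R B dl :
  0 < q < 1 -> 0 <= R -> Cmod z <= R -> 0 < dl ->
  (forall j, dl <= Cmod (Cminus (RtoC 1) (Cmult (RtoC Q) (RtoC (q ^ j))))) ->
  0 <= B -> (forall j, (j < m)%nat -> Cmod (fa q a b n j) <= B) ->
  (forall j, (j < m)%nat -> Cmod (fa q c d n j) <= 1/2) ->
  Cmod (Cmult (Cpow z k) (Xn q Q a b c d m n k)) <= Dfun q (R * ((1 + B) ^ m * 2 ^ m) * / dl * / (1 - q)) k.
Proof.
  intros Hq HR Hz Hdl Hdlj HB HBa HBc.
  pose proof (Cmod_qpoch_ge (RtoC Q) q k dl ltac:(lra) Hdlj) as HQa.
  pose proof (Abl_ge q c d m n k Hq HBc) as HCb.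
  pose proof (Qq_ge q k Hq) as HQq.
  pose proof (Abl_le q a b m n k B Hq HBa) as HAa.
  set (Qa := qpoch (RtoC Q) q k) in *. set (Cb := Abl q c d m n k) in *.
  set (Qq := qpoch (RtoC q) q k) in *. set (Aa := Abl q a b m n k) in *.
  assert (P1 : 0 < dl ^ k) by (apply pow_lt; auto).
  assert (P2 : 0 < ((1/2) ^ k) ^ m) by (apply pow_lt; apply pow_lt; lra).
  assert (P3 : 0 < (1 - q) ^ k) by (apply pow_lt; lra).
  assert (HQa0 : Qa <> RtoC 0) by (apply Cmod_gt_0; lra).
  assert (HCb0 : Cb <> RtoC 0) by (apply Cmod_gt_0; lra).
  assert (HQq0 : Qq <> RtoC 0) by (apply Cmod_gt_0; lra).
  unfold Xn. fold Qa Cb Qq Aa.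
  rewrite !Cmod_mult, !Cmod_inv, !Cmod_mult, !Cmod_R, Cmod_pow, Rabs_sgk by (try apply Cmult_neq_0; auto; lra).
  assert (e1 : Cmod z ^ k <= R ^ k) by (apply pow_incr; split; auto; apply Cmod_ge_0).
  assert (e2 : Rabs (rq q n k) * Cmod Aa <= ((1 + B) ^ k) ^ m).
  { pose proof (rq_le1 q n k ltac:(lra)). pose proof (Rabs_pos (rq q n k)). pose proof (Cmod_ge_0 Aa). nra. }
  assert (e3 : / (Cmod Qa * Cmod Cb) <= / (dl ^ k * ((1/2) ^ k) ^ m)).
  { apply Rinv_le_contravar. nra. apply Rmult_le_compat; lra. }
  assert (e4 : q ^ hh k * / Cmod Qq <= q ^ hh k * / (1 - q) ^ k).
  { apply Rmult_le_compat_l. apply pow_le; lra. apply Rinv_le_contravar; lra. }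
  assert (n1 : 0 <= Cmod z ^ k) by (apply pow_le; apply Cmod_ge_0).
  assert (n2 : 0 <= Rabs (rq q n k) * Cmod Aa) by (apply Rmult_le_pos; [apply Rabs_pos|apply Cmod_ge_0]).
  assert (n3 : 0 <= / (Cmod Qa * Cmod Cb)) by (left; apply Rinv_0_lt_compat; nra).
  assert (n4 : 0 <= q ^ hh k * / Cmod Qq) by (apply Rmult_le_pos; [apply pow_le; lra| left; apply Rinv_0_lt_compat; lra]).
  apply Rle_trans with (R ^ k * (((1 + B) ^ k) ^ m * (/ (dl ^ k * ((1/2) ^ k) ^ m) * (q ^ hh k * / (1 - q) ^ k)))).
  { apply Rmult_le_compat; auto. apply Rmult_le_pos; auto. apply Rmult_le_pos; auto.
    apply Rmult_le_compat; auto. apply Rmult_le_pos; auto.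
    apply Rmult_le_compat; auto. }
  rewrite Dfun_eq by lra.
  rewrite Rpow_mult_distr, <- pow_swap.
  replace (((1/2) ^ k) ^ m) with (/ ((2 ^ m) ^ k)).
  2:{ rewrite pow_swap. replace (1/2) with (/2) by field. rewrite pow_inv, pow_inv. reflexivity. }
  assert (0 < (2 ^ m) ^ k) by (apply pow_lt; apply pow_lt; lra).
  right. field. repeat split; lra.
Qed.

Lemma bound_Tinf q Q k z R B dl m :
  0 < q < 1 -> 0 <= R -> Cmod z <= R -> 0 < dl ->
  (forall j, dl <= Cmod (Cminus (RtoC 1) (Cmult (RtoC Q) (RtoC (q ^ j))))) -> 0 <= B ->
  Cmod (Cmult (Cpow z k) (Yk q Q k)) <= Dfun q (R * ((1 + B) ^ m * 2 ^ m) * / dl * / (1 - q)) k.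
Proof.
  intros Hq HR Hz Hdl Hdlj HB.
  pose proof (Cmod_qpoch_ge (RtoC Q) q k dl ltac:(lra) Hdlj) as HQa.
  pose proof (Qq_ge q k Hq) as HQq.
  set (Qa := qpoch (RtoC Q) q k) in *. set (Qq := qpoch (RtoC q) q k) in *.
  assert (P1 : 0 < dl ^ k) by (apply pow_lt; auto).
  assert (P3 : 0 < (1 - q) ^ k) by (apply pow_lt; lra).
  assert (HQa0 : Qa <> RtoC 0) by (apply Cmod_gt_0; lra).
  assert (HQq0 : Qq <> RtoC 0) by (apply Cmod_gt_0; lra).
  unfold Yk. fold Qa Qq.
  rewrite !Cmod_mult, !Cmod_inv, !Cmod_mult, !Cmod_R, Cmod_pow, Rabs_mult, Rabs_sgk, Rabs_R1 by (try apply Cmult_neq_0; auto; try (intro H'; injection H'; lra); lra).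
  rewrite Rmult_1_r.
  rewrite Dfun_eq by lra.
  assert (Y1 : 1 <= ((1 + B) ^ m * 2 ^ m) ^ k).
  { apply pow_R1_Rle. assert (1 <= (1 + B) ^ m) by (apply pow_R1_Rle; lra).
    assert (1 <= 2 ^ m) by (apply pow_R1_Rle; lra). nra. }
  assert (hq : q ^ hh k * q ^ hh k <= q ^ hh k).
  { assert (0 <= q ^ hh k <= 1) by (split; [apply pow_le; lra|apply pow_le1; lra]). nra. }
  assert (e1 : Cmod z ^ k <= R ^ k) by (apply pow_incr; split; auto; apply Cmod_ge_0).
  assert (e3 : / Cmod Qa <= / dl ^ k) by (apply Rinv_le_contravar; lra).
  assert (e4 : / Cmod Qq <= / (1 - q) ^ k) by (apply Rinv_le_contravar; lra).
  assert (n1 : 0 <= Cmod z ^ k) by (apply pow_le; apply Cmod_ge_0).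
  assert (n3 : 0 < / Cmod Qa) by (apply Rinv_0_lt_compat; lra).
  assert (n4 : 0 < / Cmod Qq) by (apply Rinv_0_lt_compat; lra).
  assert (n5 : 0 <= q ^ hh k) by (apply pow_le; lra).
  assert (n6 : 0 < / dl ^ k) by (apply Rinv_0_lt_compat; lra).
  assert (n7 : 0 < / (1 - q) ^ k) by (apply Rinv_0_lt_compat; lra).
  assert (n8 : 0 <= R ^ k) by (apply pow_le; lra).
  apply Rle_trans with (Cmod z ^ k * (/ Cmod Qa * (q ^ hh k * / Cmod Qq))).
  { apply Rmult_le_compat_l; auto. apply Rmult_le_compat_l. lra.
    apply Rmult_le_compat_r. lra. exact hq. }
  apply Rle_trans with (R ^ k * (/ dl ^ k * (q ^ hh k * / (1 - q) ^ k))).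
  { apply Rmult_le_compat; auto. apply Rmult_le_pos; [lra|apply Rmult_le_pos; lra].
    apply Rmult_le_compat; try lra. apply Rmult_le_pos; lra.
    apply Rmult_le_compat_l; lra. }
  assert (0 <= R ^ k * / dl ^ k * / (1 - q) ^ k * q ^ hh k).
  { apply Rmult_le_pos; auto. apply Rmult_le_pos; [apply Rmult_le_pos|]; lra. }
  nra.
Qed.

Lemma delta_exists q alpha : 0 < q < 1 -> (forall m : nat, alpha <> - INR m) ->
  exists dl, 0 < dl /\ forall j, dl <= Cmod (Cminus (RtoC 1) (Cmult (RtoC (exp (ln q * alpha))) (RtoC (q ^ j)))).
Proof.
  intros Hq Hal. set (Q := exp (ln q * alpha)). assert (HQ : 0 < Q) by apply exp_pos.
  assert (E : forall j, Cmod (Cminus (RtoC 1) (Cmult (RtoC Q) (RtoC (q ^ j)))) = Rabs (1 - Q * q ^ j)).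
  { intros j. rewrite <- Cmod_R. f_equal. unfold Cminus, Cplus, Copp, Cmult, RtoC; simpl; f_equal; ring. }
  assert (Hne : forall j, Q * q ^ j <> 1).
  { intros j Hj. unfold Q in Hj. rewrite (pow_exp q j ltac:(lra)) in Hj.
    rewrite <- exp_plus in Hj. rewrite <- exp_0 in Hj. apply exp_inv in Hj.
    assert (ln q < 0) by (rewrite <- ln_1; apply ln_increasing; lra).
    apply (Hal j). nra. }
  destruct (exists_small_pow q (/ (2 * Q)) Hq) as [J HJ]. apply Rinv_0_lt_compat; lra.
  destruct (fin_min_pos (fun j => Rabs (1 - Q * q ^ j)) J) as [d [Hd Hd']].
  { intros j _. apply Rabs_pos_lt. specialize (Hne j). lra. }
  exists (Rmin d (1/2)). split. apply Rmin_pos; lra. intros j. rewrite E.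
  destruct (Nat.lt_ge_cases j J) as [Hj|Hj].
  - eapply Rle_trans. apply Rmin_l. apply Hd'; auto.
  - eapply Rle_trans. apply Rmin_r. pose proof (pow_decr q J j ltac:(lra) Hj).
    assert (Q * q ^ j <= 1/2).
    { apply Rle_trans with (Q * / (2 * Q)). apply Rmult_le_compat_l; lra. right; field; lra. }
    assert (0 <= Q * q ^ j) by (apply Rmult_le_pos; [lra|apply pow_le; lra]).
    rewrite Rabs_pos_eq; lra.
Qed.

Theorem proposition5 (q : R) (s : nat) (alpha : R)
  (a c : nat -> R) (b d : nat -> C) :
  0 < q < 1 ->
  (1 <= s)%nat ->
  (forall m : nat, alpha <> - INR m) ->
  (forall j : nat, (j < s - 1)%nat ->
     0 < a j /\ 0 < c j /\
     (forall (n : nat) (m : nat), (1 <= n)%nat ->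
        a j * INR n + fst (b j) <> - INR m /\
        c j * INR n + fst (d j) <> - INR m)) ->
  cvg_unif_compact
    (fun (n : nat) (z : C) =>
       phi (qpow q (RtoC (- INR n))
              :: map (fun j => qpow q (Cplus (RtoC (a j * INR n)) (b j))) (seq 0 (s - 1)))
           (qpow q (RtoC alpha)
              :: map (fun j => qpow q (Cplus (RtoC (c j * INR n)) (d j))) (seq 0 (s - 1)))
           q (Cmult (RtoC (q ^ n)) z))
    (fun z : C => phi nil (qpow q (RtoC alpha) :: nil) q z)
  /\
  (forall z : C, z <> RtoC 0 ->
     phi nil (qpow q (RtoC alpha) :: nil) q z =
     Cmult (cpow (Cdiv (Copp z) (Cmult (RtoC ((q - 1) ^ 2)) (qpow q (RtoC alpha))))
                 (RtoC ((1 - alpha) / 2)))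
       (Cmult (qGamma q (RtoC alpha))
          (J2 (RtoC (alpha - 1))
              (Cmult (RtoC 2) (csqrt (Cdiv (Copp z) (qpow q (RtoC alpha))))) q))).
Proof.
  intros Hq Hs Hal Hab.
  split; [| intros z Hz; apply part2; auto].
  intros K HK eps He.
  destruct (compact_bounded K HK) as [R [HR HRK]].
  rewrite (qpow_RtoC q alpha).
  set (Q := exp (ln q * alpha)).
  destruct (delta_exists q alpha Hq Hal) as [dl [Hdl Hdlj]]. fold Q in Hdlj.
  destruct (fin_max (fun j => exp (ln q * fst (b j))) (s - 1)) as [B0 HB0].
  set (B := Rmax B0 0).
  assert (HB : 0 <= B) by apply Rmax_r.
  assert (HBa : forall n j, (j < s - 1)%nat -> Cmod (fa q a b n j) <= B).
  { intros n j Hj. eapply Rle_trans. apply Cmod_fa_le; auto. apply Hab; auto.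
    eapply Rle_trans. apply HB0; auto. apply Rmax_l. }
  destruct (fin_N (fun j n => Cmod (fa q c d n j) <= 1/2) (s - 1)) as [N0 HN0].
  { intros j Hj. apply eventually_fa_small; auto. apply Hab; auto. }
  set (G := R * ((1 + B) ^ (s - 1) * 2 ^ (s - 1)) * / dl * / (1 - q)).
  assert (HG : 0 <= G).
  { unfold G. apply Rmult_le_pos. apply Rmult_le_pos. apply Rmult_le_pos. auto.
    apply Rmult_le_pos; apply pow_le; lra. left; apply Rinv_0_lt_compat; lra. left; apply Rinv_0_lt_compat; lra. }
  assert (HQa : forall k, qpoch (RtoC Q) q k <> RtoC 0).
  { intros k. apply Cmod_gt_0. eapply Rlt_le_trans. 2: apply (Cmod_qpoch_ge _ _ _ dl); auto; lra.
    apply pow_lt; auto. }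
  destruct (unif_main
    (fun n z k => phi_term (qpow q (RtoC (- INR n))
              :: map (fun j => qpow q (Cplus (RtoC (a j * INR n)) (b j))) (seq 0 (s - 1)))
           (RtoC Q :: map (fun j => qpow q (Cplus (RtoC (c j * INR n)) (d j))) (seq 0 (s - 1)))
           q (Cmult (RtoC (q ^ n)) z) k)
    (fun z k => phi_term nil (RtoC Q :: nil) q z k)
    (Xn q Q a b c d (s - 1)) (Yk q Q) (Dfun q G) N0 R HR) with (eps := eps) as [N HN]; auto.
  - intros n z k. apply term_eq. lra.
  - intros z k. apply term_inf_eq.
  - intros k. apply CL_X; auto. intros j Hj. destruct (Hab j Hj) as [H1 [H2 _]]. auto.
  - intros n z k Hn Hz. cbv beta. rewrite term_eq by lra. unfold G. apply bound_T; auto.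
  - intros z k Hz. cbv beta. rewrite term_inf_eq. unfold G. apply bound_Tinf; auto.
  - apply tailD; auto.
  - exists N. intros n Hn z Hz. apply (HN n Hn z (HRK z Hz)).
Qed.
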